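(* Let $I=[a,b]$ with $|I|<1$, $\gamma>0$, and $\mathcal{K}\in\mathrm{D}^{1+\mathcal{Z}_\gamma}(I)$. For $x\in I$ let $z=\frac{b-x}{b-a}$. Then there is a constant $C>0$ such that for all $x\in I$ $$|z\mathcal{K}'(a)+(1-z)\mathcal{K}'(b)-\mathcal{K}'(x)|\le\begin{cases}C|I|\,T_\gamma(z,|I|), & z\in[0,\frac12],\\ C|I|\,T_\gamma(1-z,|I|), & z\in(\frac12,1].\end{cases}$$
   Context: $\mathcal{Z}_\gamma(x)=(\log\frac1x)^{-\gamma}$ for $x\in(0,1)$, $\mathcal{Z}_\gamma(0)=0$. $\mathrm{D}^{1+\mathcal{Z}_\gamma}(I)$ is the class of $C^1$ diffeomorphisms $\mathcal{K}$ of $I$ onto its image whose derivative satisfies: there is $C_0>0$ with $|\mathcal{K}'(\xi+\tau)+\mathcal{K}'(\xi-\tau)-2\mathcal{K}'(\xi)|\le C_0\tau\mathcal{Z}_\gamma(\tau)$ for all $\tau\in[0,|I|/2]$ and all $\xi$ with $\xi\pm\tau\in I$. $T_\gamma:[0,\frac12]\times(0,1)\to\mathbb{R}$ is defined by $T_\gamma(s,t)=s\int_s^1\frac{\mathcal{Z}_\gamma(xt)}{x}dx+\int_0^s\mathcal{Z}_\gamma(xt)dx$ for $s\in(0,\frac12]$ and $T_\gamma(0,t)=0$. *)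

(* Defs.v *)
From Stdlib Require Import Reals.
From Coquelicot Require Import Coquelicot.
Open Scope R_scope.

(* Z_gamma(x) = (log (1/x))^(-gamma) for x in (0,1), Z_gamma(0) = 0.
   (Values outside [0,1) are irrelevant: they are never used.) *)
Definition Zg (gamma x : R) : R :=
  if Rle_dec x 0 then 0 else Rpower (ln (/ x)) (- gamma).

Definition Tg (gamma s t : R) : R :=
  if Rle_dec s 0 then 0
  else s * RInt (fun x => Zg gamma (x * t) / x) s 1
       + RInt (fun x => Zg gamma (x * t)) 0 s.

Definition has_deriv_on (a b : R) (K dK : R -> R) : Prop :=
  forall x, a <= x <= b ->
    filterlim (fun y => (K y - K x) / (y - x))
      (within (fun y => a <= y <= b /\ y <> x) (locally x)) (locally (dK x)).

Definition C1_diffeo_on (a b : R) (K dK : R -> R) : Prop :=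
  has_deriv_on a b K dK /\
  (forall x, a <= x <= b ->
     filterlim dK (within (fun y => a <= y <= b) (locally x)) (locally (dK x))) /\
  (forall x y, a <= x <= b -> a <= y <= b -> K x = K y -> x = y) /\
  (forall x, a <= x <= b -> dK x <> 0).

Definition in_D1Z (gamma a b : R) (K dK : R -> R) : Prop :=
  C1_diffeo_on a b K dK /\
  exists C0, 0 < C0 /\
    forall tau xi, 0 <= tau <= (b - a) / 2 ->
      a <= xi - tau -> xi + tau <= b ->
      Rabs (dK (xi + tau) + dK (xi - tau) - 2 * dK xi) <= C0 * tau * Zg gamma tau.

(* Main.v *)
Require Import Defs.
From Stdlib Require Import Reals Lra.
From Coquelicot Require Import Coquelicot.
Open Scope R_scope.

Lemma exp_le_mono x y : x <= y -> exp x <= exp y.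
Proof. intros H; destruct (Rle_lt_or_eq _ _ H) as [H1|H1]; [left; apply exp_increasing; auto| subst; lra]. Qed.

Lemma Zg_nonneg g y : 0 <= Zg g y.
Proof. unfold Zg; destruct (Rle_dec y 0); [lra| unfold Rpower; left; apply exp_pos]. Qed.

Lemma Zg_form g y : 0 < y -> Zg g y = exp (- g * ln (ln (/ y))).
Proof. intros H; unfold Zg, Rpower; destruct (Rle_dec y 0); [lra| reflexivity]. Qed.

Lemma ln_inv_pos y : 0 < y < 1 -> 0 < ln (/ y).
Proof. intros H; rewrite <- ln_1; apply ln_increasing; [lra|].
  rewrite <- Rinv_1; apply Rinv_lt_contravar; lra. Qed.

Lemma Zg_mono g y1 y2 : 0 <= g -> y1 <= y2 -> y2 < 1 -> Zg g y1 <= Zg g y2.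
Proof.
  intros Hg H12 H2.
  destruct (Rle_dec y1 0) as [H|H].
  { unfold Zg at 1; destruct (Rle_dec y1 0); [apply Zg_nonneg| lra]. }
  rewrite !Zg_form by lra. apply exp_le_mono.
  assert (ln (ln (/ y2)) <= ln (ln (/ y1))).
  { apply ln_le. apply ln_inv_pos; lra. apply ln_le. apply Rinv_0_lt_compat; lra.
    apply Rinv_le_contravar; lra. }
  nra.
Qed.

Lemma locally_pos x : 0 < x -> locally x (fun y => 0 < y).
Proof.
  intros H. exists (mkposreal x H). intros y Hy. unfold ball in Hy; simpl in Hy.
  unfold AbsRing_ball, abs, minus, plus, opp in Hy; simpl in Hy. apply Rabs_def2 in Hy. lra.
Qed.

Lemma Zc_cont g L x : 0 < L -> 0 < x -> x * L < 1 -> continuous (fun x => Zg g (x*L)) x.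
Proof.
  intros HL Hx H1.
  apply continuous_ext_loc with (fun x => exp (- g * ln (ln (/ (x*L))))).
  { generalize (locally_pos x Hx). apply filter_imp. intros y Hy. rewrite Zg_form; [auto| nra]. }
  apply (@ex_derive_continuous R_AbsRing R_NormedModule). auto_derive. repeat split.
  - nra. - apply Rinv_0_lt_compat; nra. - apply ln_inv_pos; nra.
Qed.

Lemma F_cont g L x : 0 < L -> 0 < x -> x * L < 1 -> continuous (fun x => Zg g (x*L) / x) x.
Proof.
  intros HL Hx H1.
  apply continuous_ext_loc with (fun x => exp (- g * ln (ln (/ (x*L)))) / x).
  { generalize (locally_pos x Hx). apply filter_imp. intros y Hy. rewrite Zg_form; [auto| nra]. }
  apply (@ex_derive_continuous R_AbsRing R_NormedModule). auto_derive. repeat split.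
  - nra. - apply Rinv_0_lt_compat; nra. - apply ln_inv_pos; nra. - lra.
Qed.

Lemma Zc_cont0 g L : 0 < L -> 0 < g -> continuous (fun x => Zg g (x*L)) 0.
Proof.
  intros HL Hg. unfold continuous. apply filterlim_locally. intro eps.
  set (K := exp (/ g * ln (/ eps))).
  assert (HK : 0 < K) by apply exp_pos.
  assert (Hd : 0 < exp (- K) / L) by (apply Rdiv_lt_0_compat; [apply exp_pos| lra]).
  exists (mkposreal _ Hd). intros y Hy. unfold ball in Hy |- *; simpl in Hy |- *.
  unfold AbsRing_ball, abs, minus, plus, opp in Hy |- *; simpl in Hy |- *.
  rewrite Rmult_0_l. unfold Zg at 2. destruct (Rle_dec 0 0) as [_|n]; [|lra].
  rewrite Ropp_0, Rplus_0_r in *.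
  assert (Hy' : Rabs y * L < exp (- K)).
  { apply Rmult_lt_compat_r with (r := L) in Hy; [|lra]. field_simplify in Hy; lra. }
  destruct (Rle_dec (y * L) 0) as [H0|H0].
  { unfold Zg; destruct (Rle_dec (y*L) 0); [|lra]. rewrite Rabs_R0. apply cond_pos. }
  assert (Hyl : 0 < y * L) by lra.
  assert (y * L < exp (- K)).
  { assert (y <= Rabs y) by apply Rle_abs. nra. }
  rewrite Zg_form by lra. rewrite Rabs_pos_eq by (left; apply exp_pos).
  assert (H3 : K < ln (/ (y * L))).
  { rewrite <- (ln_exp K). apply ln_increasing. apply exp_pos.
    replace (exp K) with (/ exp (- K)). apply Rinv_lt_contravar. nra. auto.
    rewrite exp_Ropp, Rinv_inv; auto. }
  assert (H4 : ln K < ln (ln (/ (y * L)))) by (apply ln_increasing; auto).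
  unfold K in H4. rewrite ln_exp in H4. rewrite ln_Rinv in H4 by apply cond_pos.
  assert (H5 : - g * ln (ln (/ (y * L))) < ln eps).
  { assert (g * (/ g * - ln eps) < g * ln (ln (/ (y * L)))) by (apply Rmult_lt_compat_l; lra).
    assert (g * (/ g * - ln eps) = - ln eps) by (field; lra). lra. }
  rewrite <- (exp_ln eps) by apply cond_pos. apply exp_increasing. auto.
Qed.

Definition FF g L := fun x => Zg g (x*L) / x.

Lemma ex_F g L u v : 0 < L < 1 -> 0 < u -> u <= v -> v <= 1 -> ex_RInt (FF g L) u v.
Proof.
  intros HL Hu Huv Hv. apply (@ex_RInt_continuous R_CompleteNormedModule). intros z Hz.
  rewrite Rmin_left, Rmax_right in Hz by lra. apply F_cont; nra.
Qed.

Lemma F_nonneg g L x : 0 < x -> 0 <= FF g L x.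
Proof. intros Hx; unfold FF. apply Rmult_le_pos; [apply Zg_nonneg| left; apply Rinv_0_lt_compat; auto]. Qed.

Lemma RInt_F_nonneg g L u v : 0 < L < 1 -> 0 < u -> u <= v -> v <= 1 -> 0 <= RInt (FF g L) u v.
Proof. intros. apply RInt_ge_0; auto. apply ex_F; auto. intros; apply F_nonneg; lra. Qed.

Lemma Jstep g L s : 0 <= g -> 0 < L < 1 -> 0 < s <= 1/2 -> Zg g (s*L) / 2 <= RInt (FF g L) s (2*s).
Proof.
  intros Hg HL Hs.
  apply Rle_trans with (RInt (fun _ => Zg g (s*L) / (2*s)) s (2*s)).
  { rewrite RInt_const. unfold scal; simpl; unfold mult; simpl. right; field. lra. }
  apply RInt_le. lra. apply ex_RInt_const. apply ex_F; lra.
  intros x Hx. unfold FF.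
  assert (Zg g (s*L) <= Zg g (x*L)) by (apply Zg_mono; nra).
  assert (0 <= Zg g (s*L)) by apply Zg_nonneg.
  unfold Rdiv. apply Rle_trans with (Zg g (s*L) * / x).
  apply Rmult_le_compat_l; auto. apply Rinv_le_contravar; lra.
  apply Rmult_le_compat_r; auto. left; apply Rinv_0_lt_compat; lra.
Qed.

Lemma J_split g L s : 0 < L < 1 -> 0 < s <= 1/2 ->
  RInt (FF g L) s 1 = RInt (FF g L) s (2*s) + RInt (FF g L) (2*s) 1.
Proof.
  intros HL Hs. rewrite <- (RInt_Chasles (FF g L) s (2*s) 1); [reflexivity| |]; apply ex_F; lra.
Qed.

Lemma J_lower g L s : 0 <= g -> 0 < L < 1 -> 0 < s <= 1/2 ->
  Zg g (L/2) / 2 <= RInt (FF g L) s 1.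
Proof.
  intros Hg HL Hs.
  rewrite <- (RInt_Chasles (FF g L) s (1/2) 1) by (apply ex_F; lra).
  unfold plus; simpl.
  assert (H := Jstep g L (1/2) Hg HL ltac:(lra)).
  replace (2 * (1/2)) with 1 in H by field. replace (1/2*L) with (L/2) in H by field.
  assert (0 <= RInt (FF g L) s (1/2)) by (apply RInt_F_nonneg; lra). lra.
Qed.

Lemma I0_nonneg g L s : 0 < g -> 0 < L < 1 -> 0 <= s <= 1 -> 0 <= RInt (fun x => Zg g (x*L)) 0 s.
Proof.
  intros Hg HL Hs. apply RInt_ge_0. lra.
  apply (@ex_RInt_continuous R_CompleteNormedModule). intros z Hz. rewrite Rmin_left, Rmax_right in Hz by lra.
  destruct (Req_dec z 0) as [->|Hz0]. apply Zc_cont0; lra. apply Zc_cont; nra.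
  intros; apply Zg_nonneg.
Qed.

Lemma lim_half y M0 G : 0 <= M0 -> (forall n, y <= (/2)^n * M0 + G) -> y <= G.
Proof.
  intros HM H. destruct (Rle_dec y G) as [|Hn]; auto. exfalso.
  destruct (Req_dec M0 0) as [->|HM0].
  { specialize (H O). lra. }
  assert (Hp : 0 < (y - G) / M0) by (apply Rdiv_lt_0_compat; lra).
  destruct (pow_lt_1_zero (/2) ltac:(rewrite Rabs_pos_eq; lra) _ Hp) as [N HN].
  specialize (HN N (le_n _)). specialize (H N).
  rewrite Rabs_pos_eq in HN by (apply pow_le; lra).
  apply Rmult_lt_compat_r with (r := M0) in HN; [|lra].
  replace ((y - G) / M0 * M0) with (y - G) in HN by (field; lra). lra.
Qed.

Lemma tri_step (h : R -> R) a b c E : h a = 0 -> Rabs (h b + h a - 2 * h c) <= E ->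
  Rabs (h c) <= Rabs (h b) / 2 + E / 2.
Proof.
  intros H0 H. rewrite H0 in H.
  replace (h c) with ((h b - (h b + 0 - 2 * h c)) / 2) by field.
  unfold Rdiv. rewrite Rabs_mult, (Rabs_pos_eq (/2)) by lra.
  assert (Rabs (h b - (h b + 0 - 2 * h c)) <= Rabs (h b) + Rabs (h b + 0 - 2 * h c)).
  { unfold Rminus; rewrite <- (Rabs_Ropp (h b + 0 + - (2 * h c))). apply Rabs_triang. }
  lra.
Qed.

Lemma main_abs (g L C0 M0 : R) (h : R -> R) :
  0 < g -> 0 < L < 1 -> 0 < C0 -> h 0 = 0 -> h 1 = 0 ->
  (forall z, 0 <= z <= 1 -> Rabs (h z) <= M0) ->
  (forall z t, 0 <= t <= 1/2 -> 0 <= z - t -> z + t <= 1 ->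
     Rabs (h (z+t) + h (z-t) - 2 * h z) <= C0 * (t*L) * Zg g (t*L)) ->
  forall s, 0 <= s <= 1/2 -> Rabs (h s) <= 4 * C0 * L * s * RInt (FF g L) s 1.
Proof.
  intros Hg HL HC h0 h1 HM Hsd.
  set (G := C0 * L * Zg g (L/2) / 2).
  assert (HZ2 : 0 <= Zg g (L/2)) by apply Zg_nonneg.
  assert (HG : 0 <= G) by (unfold G; apply Rmult_le_pos; [|lra]; apply Rmult_le_pos; nra).
  assert (HM0 : 0 <= M0) by (specialize (HM 0 ltac:(lra)); rewrite h0, Rabs_R0 in HM; auto).
  assert (Herr : forall t, 0 <= t <= 1/2 -> C0 * (t*L) * Zg g (t*L) <= C0 * (L/2) * Zg g (L/2)).
  { intros t Ht. assert (Zg g (t*L) <= Zg g (L/2)) by (apply Zg_mono; nra).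
    assert (0 <= Zg g (t*L)) by apply Zg_nonneg.
    assert (t * L * Zg g (t*L) <= (L/2) * Zg g (L/2)).
    { apply Rle_trans with (t*L * Zg g (L/2)). apply Rmult_le_compat_l; nra. apply Rmult_le_compat_r; nra. }
    nra. }
  assert (Hglob : forall z, 0 <= z <= 1 -> Rabs (h z) <= G).
  { intros z Hz. apply (lim_half _ M0 G HM0). intro n. revert z Hz. induction n as [|n IH]; intros z Hz.
    - simpl. specialize (HM z Hz). lra.
    - destruct (Rle_dec z (1/2)) as [Hz2|Hz2].
      + assert (H := Hsd z z ltac:(lra) ltac:(lra) ltac:(lra)).
        replace (z - z) with 0 in H by ring.
        apply tri_step in H; auto.
        assert (H2 := IH (z+z) ltac:(lra)). assert (H3 := Herr z ltac:(lra)).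
        simpl. unfold G in *. lra.
      + assert (H := Hsd z (1 - z) ltac:(lra) ltac:(lra) ltac:(lra)).
        replace (z + (1 - z)) with 1 in H by ring.
        assert (H' : Rabs (h (z - (1 - z)) + h 1 - 2 * h z) <= C0 * ((1 - z) * L) * Zg g ((1 - z) * L)).
        { rewrite Rplus_comm in H. exact H. }
        apply tri_step in H'; auto.
        assert (H2 := IH (z - (1 - z)) ltac:(lra)). assert (H3 := Herr (1 - z) ltac:(lra)).
        simpl. unfold G in *. lra. }
  set (Phi := fun s => 4 * C0 * L * s * RInt (FF g L) s 1).
  assert (HPhi : forall s, 0 < s <= 1/2 -> 0 <= Phi s).
  { intros s Hs. unfold Phi. apply Rmult_le_pos. repeat apply Rmult_le_pos; lra. apply RInt_F_nonneg; lra. }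
  intros s Hs. destruct (Req_dec s 0) as [->|Hs0].
  { rewrite h0, Rabs_R0. right; ring. }
  apply (lim_half _ G _ HG). intro n. revert s Hs Hs0. induction n as [|n IH]; intros s Hs Hs0;
  assert (Hpos : 0 < s) by (destruct Hs as [[Hs1|Hs1] _]; [lra| exfalso; apply Hs0; auto]).
  - simpl. assert (0 <= Phi s) by (apply HPhi; lra). specialize (Hglob s ltac:(lra)). fold (Phi s). unfold Phi in *. lra.
  - destruct (Rle_dec s (1/4)) as [Hs4|Hs4].
    + assert (H := Hsd s s ltac:(lra) ltac:(lra) ltac:(lra)).
      replace (s - s) with 0 in H by ring.
      apply tri_step in H; auto.
      assert (H2 := IH (s+s) ltac:(lra) ltac:(lra)).
      assert (Hst := Jstep g L s ltac:(lra) HL ltac:(lra)).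
      assert (Hsp := J_split g L s HL ltac:(lra)).
      replace (s + s) with (2 * s) in H, H2 by ring.
      assert (HJ2 : 0 <= RInt (FF g L) (2 * s) 1) by (apply RInt_F_nonneg; lra).
      assert (HZs : 0 <= Zg g (s * L)) by apply Zg_nonneg.
      fold (Phi s). unfold Phi in *. rewrite Hsp. simpl.
      set (A := RInt (FF g L) s (2 * s)) in *.
      set (B := RInt (FF g L) (2 * s) 1) in *.
      set (Z := Zg g (s * L)) in *.
      assert (HP : 0 <= C0*L*s) by (repeat apply Rmult_le_pos; lra).
      assert (H4 : (C0*L*s) * (Z/2) <= (C0*L*s) * A) by (apply Rmult_le_compat_l; lra).
      assert (H5 : 0 <= (C0*L*s)*Z) by (apply Rmult_le_pos; lra).
      lra.
    + assert (H := Hglob s ltac:(lra)).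
      assert (Hl := J_lower g L s ltac:(lra) HL ltac:(lra)).
      assert (0 <= (/2)^(S n) * G) by (apply Rmult_le_pos; auto; apply pow_le; lra).
      fold (Phi s). unfold Phi. unfold G in H.
      set (J := RInt (FF g L) s 1) in *.
      assert (C0 * L * Zg g (L / 2) / 2 <= 4 * C0 * L * s * J).
      { apply Rle_trans with (4 * C0 * L * (1/4) * (Zg g (L/2) / 2)). right; field.
        assert (0 <= C0 * L) by (apply Rmult_le_pos; lra).
        apply Rmult_le_compat.
        - lra.
        - lra.
        - apply Rmult_le_compat_l; [ |lra]. lra.
        - lra. }
      lra.
Qed.

Definition clamp a b y := Rmax a (Rmin b y).

Lemma clamp_id a b x : a <= x <= b -> clamp a b x = x.
Proof. intros H; unfold clamp. rewrite Rmin_right by lra. rewrite Rmax_right by lra. auto. Qed.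

Lemma clamp_in a b y : a <= b -> a <= clamp a b y <= b.
Proof. intros H; unfold clamp, Rmax, Rmin. repeat destruct Rle_dec; lra. Qed.

Lemma clamp_dist a b x y : a <= x <= b -> Rabs (clamp a b y - x) <= Rabs (y - x).
Proof.
  intros H; unfold clamp, Rmax, Rmin. repeat destruct Rle_dec;
  unfold Rabs; repeat destruct Rcase_abs; lra.
Qed.

Lemma ext_cont a b f x : a <= b -> a <= x <= b ->
  filterlim f (within (fun y => a <= y <= b) (locally (T:=R_UniformSpace) x)) (locally (T:=R_UniformSpace) (f x)) ->
  filterlim (fun y => f (clamp a b y)) (locally (T:=R_UniformSpace) x) (locally (T:=R_UniformSpace) (f (clamp a b x))).
Proof.
  intros Hab Hx Hf. rewrite clamp_id by auto.
  apply filterlim_comp with (G := within (fun y => a <= y <= b) (locally (T:=R_UniformSpace) x)); auto.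
  intros P HP. destruct HP as [eps HP]. exists eps. intros y Hy.
  apply HP. 2: apply clamp_in; auto.
  unfold ball in Hy |- *; simpl in Hy |- *.
  unfold AbsRing_ball, abs, minus, plus, opp in Hy |- *; simpl in Hy |- *.
  assert (H := clamp_dist a b x y Hx). unfold Rminus in H. lra.
Qed.

Lemma Phi_le_T g L s Cc : 0 < g -> 0 < L < 1 -> 0 <= Cc -> 0 <= s <= 1/2 ->
  Cc * L * s * RInt (FF g L) s 1 <= Cc * L * Tg g s L.
Proof.
  intros Hg HL HC Hs. unfold Tg. destruct (Rle_dec s 0) as [H|H].
  { replace s with 0 by lra. right; ring. }
  assert (H0 := I0_nonneg g L s Hg HL ltac:(lra)).
  assert (0 <= Cc * L) by (apply Rmult_le_pos; lra).
  assert (0 <= Cc * L * RInt (fun x => Zg g (x * L)) 0 s) by (apply Rmult_le_pos; lra).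
  unfold FF. lra.
Qed.

Theorem lemma2p7 (a b gamma : R) (K dK : R -> R) :
  a < b -> b - a < 1 -> 0 < gamma ->
  in_D1Z gamma a b K dK ->
  exists C, 0 < C /\
    forall x, a <= x <= b ->
      let z := (b - x) / (b - a) in
      Rabs (z * dK a + (1 - z) * dK b - dK x) <=
        (if Rle_dec z (1 / 2)
         then C * (b - a) * Tg gamma z (b - a)
         else C * (b - a) * Tg gamma (1 - z) (b - a)).
Proof.
  intros Hab HL1 Hg [[Hder [Hcont [Hinj Hnz]]] [C0 [HC0 Hsd]]].
  set (L := b - a).
  assert (HL : 0 < L < 1) by (unfold L; lra).
  destruct (bounded_continuity (K := R_AbsRing) (V := R_NormedModule)
              (fun y => dK (clamp a b y)) a b) as [M HM].
  { intros x Hx. apply ext_cont; [lra| auto| apply Hcont; auto]. }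
  assert (HM' : forall y, a <= y <= b -> Rabs (dK y) <= M).
  { intros y Hy. specialize (HM y Hy). rewrite clamp_id in HM by auto. left; exact HM. }
  set (h := fun z => dK (b - z * L) - z * dK a - (1 - z) * dK b).
  assert (Hsdh : forall z t, 0 <= t <= 1/2 -> 0 <= z - t -> z + t <= 1 ->
     Rabs (h (z+t) + h (z-t) - 2 * h z) <= C0 * (t*L) * Zg gamma (t*L)).
  { intros z t Ht H1 H2.
    assert (E : h (z+t) + h (z-t) - 2 * h z =
      dK ((b - z*L) + t*L) + dK ((b - z*L) - t*L) - 2 * dK (b - z*L)).
    { unfold h. replace (b - (z+t)*L) with ((b - z*L) - t*L) by ring.
      replace (b - (z-t)*L) with ((b - z*L) + t*L) by ring. ring. }
    rewrite E. apply Hsd.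
    - split. nra. unfold L in *. nra.
    - unfold L in *. nra.
    - unfold L in *. nra. }
  assert (Hbh : forall z, 0 <= z <= 1 -> Rabs (h z) <= 3 * M).
  { intros z Hz. unfold h.
    assert (A1 := HM' (b - z*L) ltac:(unfold L in *; split; nra)).
    assert (A2 := HM' a ltac:(lra)). assert (A3 := HM' b ltac:(lra)).
    assert (Rabs (z * dK a) <= M).
    { rewrite Rabs_mult, Rabs_pos_eq by lra. assert (0 <= Rabs (dK a)) by apply Rabs_pos. nra. }
    assert (Rabs ((1 - z) * dK b) <= M).
    { rewrite Rabs_mult, Rabs_pos_eq by lra. assert (0 <= Rabs (dK b)) by apply Rabs_pos. nra. }
    assert (T3 : forall u v w, Rabs (u - v - w) <= Rabs u + Rabs v + Rabs w)
      by (intros u v w; unfold Rabs; repeat destruct Rcase_abs; lra).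
    eapply Rle_trans. apply T3. lra. }
  assert (h0 : h 0 = 0) by (unfold h; replace (b - 0 * L) with b by ring; ring).
  assert (h1 : h 1 = 0) by (unfold h; replace (b - 1 * L) with a by (unfold L; ring); ring).
  assert (Hmain := main_abs gamma L C0 (3*M) h Hg HL HC0 h0 h1 Hbh Hsdh).
  set (h' := fun z => h (1 - z)).
  assert (Hmain' : forall s, 0 <= s <= 1/2 -> Rabs (h' s) <= 4 * C0 * L * s * RInt (FF gamma L) s 1).
  { apply (main_abs gamma L C0 (3*M) h' Hg HL HC0).
    - unfold h'. replace (1 - 0) with 1 by ring. auto.
    - unfold h'. replace (1 - 1) with 0 by ring. auto.
    - intros z Hz. unfold h'. apply Hbh. lra.
    - intros z t Ht H1 H2. unfold h'.
      replace (1 - (z + t)) with ((1 - z) - t) by ring.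
      replace (1 - (z - t)) with ((1 - z) + t) by ring.
      rewrite (Rplus_comm (h (1 - z - t))). apply Hsdh; lra. }
  exists (4 * C0). split. lra.
  intros x Hx z.
  assert (Hz : 0 <= z <= 1).
  { unfold z. split. apply Rmult_le_pos; [lra| left; apply Rinv_0_lt_compat; lra].
    apply Rmult_le_reg_r with (b - a). lra. unfold Rdiv. rewrite Rmult_assoc, Rinv_l by lra. lra. }
  assert (Ex : Rabs (z * dK a + (1 - z) * dK b - dK x) = Rabs (h z)).
  { unfold h. replace (b - z * L) with x by (unfold z, L; field; lra).
    rewrite <- Rabs_Ropp. f_equal. ring. }
  rewrite Ex. fold L.
  destruct (Rle_dec z (1/2)) as [H|H].
  - eapply Rle_trans. apply Hmain; lra.
    apply Phi_le_T; lra.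
  - replace (h z) with (h' (1 - z)) by (unfold h'; f_equal; ring).
    eapply Rle_trans. apply Hmain'; lra.
    apply Phi_le_T; lra.
Qed.
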